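(* Let $a=\{a_1,\dots,a_m\}\subseteq\mathbb{Z}_{\ge 2}$ and $n\ge 0$. Then $\chi_{\mathcal{A}_n(a)}(t)=\chi_{\widetilde{\mathcal{C}}_n}(t-1)$.
   Context: For a set $a=\{a_1,\dots,a_m\}$ of integers $\ge2$ and $n\ge 1$, $\mathcal{A}_n(a)$ denotes the hyperplane arrangement in $\mathbb{R}^n$ consisting of the hyperplanes $x_i=0$ ($1\le i\le n$), $x_i=x_j$ ($1\le i<j\le n$), and $x_i=a_rx_j$ ($1\le i\neq j\le n$, $1\le r\le m$). $\widetilde{\mathcal{C}}_n$ denotes the arrangement in $\mathbb{R}^n$ consisting of the hyperplanes $x_i-x_j=0$ ($1\le i<j\le n$) and $x_i-x_j=\log a_r/\log a_1$ ($1\le i\neq j\le n$, $1\le r\le m$; for $r=1$ this is $x_i-x_j=1$). For $n=0$ both are empty arrangements in $\mathbb{R}^0$ with characteristic polynomial $1$. For a finite arrangement $\mathcal{A}$ of affine hyperplanes in $\mathbb{R}^n$, the characteristic polynomial is $\chi_{\mathcal{A}}(t)=\sum_{\mathcal{B}}(-1)^{\#\mathcal{B}}t^{n-\operatorname{rank}(\mathcal{B})}$, the sum over subsets $\mathcal{B}\subseteq\mathcal{A}$ whose hyperplanes have nonempty common intersection, where $\operatorname{rank}(\mathcal{B})$ is the dimension of the span of the normal vectors of the hyperplanes in $\mathcal{B}$. *)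

(* Defs.v *)
From Stdlib Require Import Reals List Arith ClassicalEpsilon.
Import ListNotations.
Open Scope R_scope.

(* Vectors / points of R^n: functions nat -> R; only coordinates 0..n-1 matter. *)
Definition vec := nat -> R.

Fixpoint sumn_R (n : nat) (f : nat -> R) : R :=
  match n with O => 0 | S k => sumn_R k f + f k end.

Record hyperplane := mkH { nrm : vec ; cst : R }.

Definition on_hyp (n : nat) (h : hyperplane) (x : vec) : Prop :=
  sumn_R n (fun i => nrm h i * x i) = cst h.

(* An arrangement is a (duplicate-free) list of hyperplanes. *)
Definition arrangement := list hyperplane.

(* All sublists (= all subsets, for a duplicate-free list). *)
Fixpoint subsets {A : Type} (l : list A) : list (list A) :=
  match l with
  | [] => [[]]
  | x :: l' => let s := subsets l' in map (cons x) s ++ s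
  end.

Definition lin_indep (n : nat) (vs : list vec) : Prop :=
  forall c : nat -> R,
    (forall i, (i < n)%nat ->
       fold_right Rplus 0 (map (fun k => c k * nth k vs (fun _ => 0) i)
                               (seq 0 (length vs))) = 0) ->
    forall k, (k < length vs)%nat -> c k = 0.

Definition lin_indep_b (n : nat) (vs : list vec) : bool :=
  if excluded_middle_informative (lin_indep n vs) then true else false.

Definition rank_vecs (n : nat) (vs : list vec) : nat :=
  list_max (map (@length vec) (filter (lin_indep_b n) (subsets vs))).

Definition rank_hyps (n : nat) (B : arrangement) : nat := rank_vecs n (map nrm B).

Definition central_in (n : nat) (B : arrangement) : Prop :=
  exists x : vec, forall h, In h B -> on_hyp n h x.

Definition central_b (n : nat) (B : arrangement) : bool :=
  if excluded_middle_informative (central_in n B) then true else false.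

Definition charpoly (n : nat) (A : arrangement) (t : R) : R :=
  fold_right Rplus 0
    (map (fun B => (-1) ^ length B * t ^ (n - rank_hyps n B))
         (filter (central_b n) (subsets A))).

Definition e (i : nat) : vec := fun k => if Nat.eqb k i then 1 else 0.

Definition vlin (a : R) (u : vec) (b : R) (w : vec) : vec :=
  fun k => a * u k + b * w k.

Definition pairs_lt (n : nat) : list (nat * nat) :=
  flat_map (fun i => map (fun j => (i, j)) (seq (S i) (n - S i))) (seq 0 n).

Definition pairs_neq (n : nat) : list (nat * nat) :=
  flat_map (fun i => map (fun j => (i, j))
                         (filter (fun j => negb (Nat.eqb i j)) (seq 0 n)))
           (seq 0 n).

Definition braid (n : nat) : arrangement :=
  map (fun p => mkH (vlin 1 (e (fst p)) (-1) (e (snd p))) 0) (pairs_lt n).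

Definition A_arr (n : nat) (a : list nat) : arrangement :=
  map (fun i => mkH (e i) 0) (seq 0 n)
  ++ braid n
  ++ flat_map (fun p => map (fun r => mkH (vlin 1 (e (fst p)) (- INR r) (e (snd p))) 0) a)
              (pairs_neq n).

Definition C_arr (n : nat) (a : list nat) : arrangement :=
  braid n
  ++ flat_map (fun p => map (fun r => mkH (vlin 1 (e (fst p)) (-1) (e (snd p)))
                                         (ln (INR r) / ln (INR (hd O a)))) a)
              (pairs_neq n).

(* Main.v *)
Require Import Defs.
From Stdlib Require Import Reals List Arith Lra Lia Classical ClassicalEpsilon FunctionalExtensionality.
Import ListNotations.
Open Scope R_scope.

Definition dot (n : nat) (v x : vec) : R := sumn_R n (fun i => v i * x i).
Definition KerL (n : nat) (vs : list vec) (x : vec) : Prop :=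
  forall v, In v vs -> dot n v x = 0.
Definition inspan (n : nat) (v : vec) (vs : list vec) : Prop :=
  forall x, KerL n vs x -> dot n v x = 0.

Lemma dot_e_lt n k x : (k < n)%nat -> dot n (e k) x = x k.
Proof.
  unfold dot. induction n as [|m IH]; intros Hk; [lia|].
  simpl. unfold e at 2. destruct (Nat.eqb m k) eqn:Hmk.
  - apply Nat.eqb_eq in Hmk. subst m.
    assert (H0 : sumn_R k (fun i => e k i * x i) = 0).
    { clear IH Hk. assert (forall j, (j <= k)%nat -> sumn_R j (fun i => e k i * x i) = 0).
      { induction j; intros; simpl; [reflexivity|].
        unfold e at 2. destruct (Nat.eqb j k) eqn:E. apply Nat.eqb_eq in E; lia.
        rewrite IHj by lia. ring. }
      apply H; lia. }
    rewrite H0. ring.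
  - apply Nat.eqb_neq in Hmk. rewrite IH by lia. ring.
Qed.

Lemma dot_e_ge n k x : (n <= k)%nat -> dot n (e k) x = 0.
Proof.
  unfold dot. induction n as [|m IH]; intros Hk; simpl; [reflexivity|].
  unfold e at 2. destruct (Nat.eqb m k) eqn:E. apply Nat.eqb_eq in E; lia.
  rewrite IH by lia. ring.
Qed.

Definition diff (i j : nat) : vec := vlin 1 (e i) (-1) (e j).

Lemma dot_vlin n a u b w x : dot n (vlin a u b w) x = a * dot n u x + b * dot n w x.
Proof.
  unfold dot, vlin. induction n; simpl; [ring|]. rewrite IHn. ring.
Qed.

Lemma dot_diff n i j x : (i < n)%nat -> (j < n)%nat -> dot n (diff i j) x = x i - x j.
Proof. intros. unfold diff. rewrite dot_vlin, !dot_e_lt by assumption. ring. Qed.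

Lemma subsets_incl {A : Type} (l ws : list A) :
  In ws (subsets l) -> forall v, In v ws -> In v l.
Proof.
  revert ws. induction l as [|x l IH]; simpl; intros ws H v Hv.
  - destruct H as [H|[]]. subst. destruct Hv.
  - apply in_app_or in H. destruct H as [H|H].
    + apply in_map_iff in H. destruct H as [w [<- Hw]].
      destruct Hv as [Hv|Hv]; [left; auto|right; eapply IH; eauto].
    + right. eapply IH; eauto.
Qed.

Lemma Forall2_nth' {A B : Type} (P : A -> B -> Prop) l1 l2 d1 d2 :
  Forall2 P l1 l2 -> forall k, (k < length l1)%nat -> P (nth k l1 d1) (nth k l2 d2).
Proof.
  induction 1; simpl; intros k Hk; [lia|].
  destruct k; auto. apply IHForall2. lia.
Qed.

From mathcomp Require Rstruct.
Module LA.
From mathcomp Require Import all_boot all_order all_algebra Rstruct.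
Import GRing.Theory.
Local Open Scope ring_scope.

Section S.
Variable n : nat.

Definition rowv (v : vec) : 'rV[R]_n := \row_(i < n) v i.
Definition colv (v : vec) : 'cV[R]_n := \col_(i < n) v i.
Definition mx (vs : list vec) : 'M[R]_(length vs, n) :=
  \matrix_(k < length vs, i < n) (List.nth k vs (fun _ => 0%R)) i.

Lemma sumn_R_big m f : sumn_R m f = \sum_(i < m) f i.
Proof.
  elim: m => [|m IH] /=; first by rewrite big_ord0.
  by rewrite big_ord_recr /= IH.
Qed.

Lemma dot_mx v x : dot n v x = (rowv v *m colv x) 0 0.
Proof.
  rewrite /dot sumn_R_big !mxE. apply: eq_bigr => i _. by rewrite !mxE.
Qed.

Lemma row_mx_nth (vs : list vec) (k : 'I_(length vs)) :
  row k (mx vs) = rowv (List.nth k vs (fun _ => 0%R)).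
Proof. apply/rowP => i. by rewrite !mxE. Qed.

Lemma In_sub v vs : List.In v vs -> (rowv v <= mx vs)%MS.
Proof.
  move=> /(List.In_nth _ _ (fun _ => 0%R)) [k [Hk Hv]].
  have Hk' : (k < length vs)%N by apply/ltP.
  apply: (eq_row_sub (Ordinal Hk')). by rewrite row_mx_nth /= Hv.
Qed.

Lemma mx_subP l (m : nat) (W : 'M[R]_(m, n)) :
  (forall v, List.In v l -> (rowv v <= W)%MS) -> (mx l <= W)%MS.
Proof.
  move=> H. apply/row_subP => k. rewrite row_mx_nth. apply: H.
  apply: List.nth_In. by apply/ltP.
Qed.

Lemma mx_Ker vs x : KerL n vs x -> mx vs *m colv x = 0.
Proof.
  move=> H. apply/matrixP => k j. rewrite ord1 !mxE.
  have := H (List.nth k vs (fun _ => 0%R)) (List.nth_In _ _ (elimT ltP (ltn_ord k))).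
  rewrite dot_mx !mxE => H0. apply: eq_trans H0. apply: eq_bigr => i _. by rewrite !mxE.
Qed.

Lemma inspan_sub v vs : inspan n v vs <-> (rowv v <= mx vs)%MS.
Proof.
  split.
  - move=> H. apply: contraT => Hn.
    move: Hn. rewrite submxE => Hn.
    set C := cokermx (mx vs).
    have [j Hj] : exists j, (rowv v *m C) 0 j != 0.
    { case: (pickP (fun j => (rowv v *m C) 0 j != 0)) => [j Hj | Hall]; first by exists j.
      exfalso. move/negP: Hn; apply. apply/eqP/matrixP => i j. rewrite ord1.
      move: (Hall j) => /= /negbFE /eqP ->. by rewrite mxE. }
    pose x (l : nat) : R := if insub l is Some i then C i j else 0.
    have Hx : forall i : 'I_n, x i = C i j.
    { move=> i. rewrite /x. by have -> : insub (nat_of_ord i) = Some i := valK i. }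
    have Hcol : forall w : 'rV[R]_n, (w *m colv x) 0 0 = (w *m C) 0 j.
    { move=> w. rewrite mxE [RHS]mxE. apply: eq_bigr => i _. congr (_ * _). by rewrite mxE Hx. }
    have HK : KerL n vs x.
    { move=> w /(List.In_nth _ _ (fun _ => 0%R)) [k [Hk <-]].
      have Hk' : (k < length vs)%N by apply/ltP.
      rewrite dot_mx.
      have -> : rowv (List.nth k vs (fun _ => 0%R)) = row (Ordinal Hk') (mx vs)
        by rewrite row_mx_nth.
      rewrite Hcol -row_mul mulmx_coker. by rewrite !mxE. }
    have := H x HK. rewrite dot_mx Hcol => Heq. by rewrite Heq eqxx in Hj.
  - move=> /submxP [D HD] x Hx. rewrite dot_mx HD -mulmxA mx_Ker //.
    by rewrite mulmx0 mxE.
Qed.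


Lemma fold_seq (f : nat -> R) s m :
  fold_right Rplus 0%R (List.map f (List.seq s m)) = \sum_(s <= k < s + m) f k.
Proof.
  elim: m s => [|m IH] s /=; first by rewrite addn0 big_geq.
  rewrite IH big_ltn ?addnS ?ltnS ?leq_addr //.
Qed.

Lemma indep_free vs : lin_indep n vs <-> row_free (mx vs).
Proof.
  split.
  - move=> H. apply: inj_row_free => u Hu.
    pose c (k : nat) : R := if insub k is Some k' then u 0 k' else 0.
    have Hc : forall k : 'I_(length vs), c k = u 0 k.
    { move=> k. rewrite /c. by have -> : insub (nat_of_ord k) = Some k := valK k. }
    have H0 := H c.
    apply/rowP => k. rewrite mxE -Hc. apply: H0; last by apply/ltP.
    move=> i /ltP Hi. rewrite fold_seq add0n big_mkord.
    have := congr1 (fun M : 'M[R]_(1, n) => M 0 (Ordinal Hi)) Hu. rewrite !mxE => Hs.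
    apply: eq_trans Hs. apply: eq_bigr => k' _. by rewrite Hc mxE.
  - move=> Hf c Hc k Hk.
    pose u : 'rV[R]_(length vs) := \row_(k < length vs) c k.
    have Hu : u *m mx vs = 0 *m mx vs.
    { rewrite mul0mx. apply/rowP => i. rewrite !mxE.
      have := Hc i (elimT ltP (ltn_ord i)). rewrite fold_seq add0n big_mkord => Hs.
      apply: eq_trans Hs. apply: eq_bigr => k' _. by rewrite !mxE. }
    have := row_free_inj Hf Hu => Hu0.
    have Hk' : (k < length vs)%N by apply/ltP.
    have := congr1 (fun M : 'M[R]_(1, length vs) => M 0 (Ordinal Hk')) Hu0. by rewrite !mxE.
Qed.

Lemma incl_sub l1 l2 : (forall v, List.In v l1 -> List.In v l2) -> (mx l1 <= mx l2)%MS.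
Proof. move=> H. apply: mx_subP => v Hv. apply: In_sub. exact: H. Qed.

Lemma mx_cons_rank v vs : \rank (mx (v :: vs)) = \rank (rowv v + mx vs)%MS.
Proof.
  apply/eqmx_rank/andP; split.
  - apply: mx_subP => w /= [<-|Hw]; first exact: addsmxSl.
    apply: submx_trans (addsmxSr _ _). exact: In_sub.
  - rewrite addsmx_sub. apply/andP; split; first by apply: In_sub; left.
    apply: incl_sub => w Hw; by right.
Qed.

Lemma rank_cons_notin_mx v vs : ~~ (rowv v <= mx vs)%MS ->
  \rank (mx (v :: vs)) = (\rank (mx vs)).+1.
Proof.
  move=> Hn. rewrite mx_cons_rank.
  have Hv : rowv v != 0.
  { apply: contra Hn => /eqP ->. exact: sub0mx. }
  case: (mxrank_adds_leqif (rowv v) (mx vs)) => H1 _.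
  rewrite rank_rV Hv /= in H1.
  case: (mxrank_leqif_sup (addsmxSr (rowv v) (mx vs))) => H2 H3.
  have H4 : (\rank (mx vs) != \rank (rowv v + mx vs)%MS).
  { rewrite H3. apply: contra Hn => H. apply: submx_trans H. exact: addsmxSl. }
  apply/eqP. rewrite eqn_leq H1 /= ltn_neqAle H4 H2 //.
Qed.

Lemma rank_cons_in_mx v vs : (rowv v <= mx vs)%MS -> \rank (mx (v :: vs)) = \rank (mx vs).
Proof.
  move=> H. apply/eqmx_rank/andP; split.
  - apply: mx_subP => w /= [<-|Hw] //. exact: In_sub.
  - apply: incl_sub => w Hw; by right.
Qed.

Lemma exists_basis vs : exists ws, List.In ws (subsets vs) /\ row_free (mx ws) /\ (mx vs <= mx ws)%MS.
Proof.
  elim: vs => [|v vs [ws [Hin [Hf Hs]]]].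
  - exists nil. split; first by left. split.
    + by rewrite /row_free -leqn0 rank_leq_row.
    + by apply: mx_subP.
  - case Hb: (rowv v <= mx ws)%MS.
    + exists ws. split; first by rewrite /=; apply: List.in_or_app; right.
      split => //. apply: mx_subP => w /= [<-|Hw] //.
      apply: submx_trans Hs. exact: In_sub.
    + exists (v :: ws). split.
      { rewrite /=. apply: List.in_or_app; left. exact: List.in_map. }
      split.
      * have Hb' : ~~ (rowv v <= mx ws)%MS by rewrite Hb.
        rewrite /row_free (rank_cons_notin_mx _ _ Hb'). move: Hf; rewrite /row_free => /eqP -> //.
      * apply: mx_subP => w /= [<-|Hw]; first exact: (In_sub v (v :: ws) (or_introl erefl)).
        apply: submx_trans (incl_sub ws (v :: ws) _); last by move=> x Hx; right.
        apply: submx_trans Hs. exact: In_sub.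
Qed.

Lemma rank_vecs_mx vs : rank_vecs n vs = \rank (mx vs).
Proof.
  apply/eqP. rewrite eqn_leq. apply/andP; split.
  - apply/leP. apply list_max_le. apply List.Forall_forall => x.
    move=> /List.in_map_iff [ws [<- /List.filter_In [Hin Hb]]].
    move: Hb. rewrite /lin_indep_b. case: excluded_middle_informative => // Hl _.
    apply/leP. move/indep_free: Hl. rewrite /row_free => /eqP <-.
    apply: mxrankS. apply: incl_sub. exact: subsets_incl.
  - have [ws [Hin [Hf Hs]]] := exists_basis vs.
    apply: leq_trans (mxrankS Hs) _. have := Hf. rewrite /row_free => /eqP ->.
    apply/leP.
    have Hall := proj1 (List.Forall_forall _ _) (proj1 (list_max_le (List.map (@length vec) (List.filter (lin_indep_b n) (subsets vs))) _) (le_n _)).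
    apply: Hall. apply: List.in_map. apply/List.filter_In. split => //.
    rewrite /lin_indep_b. case: excluded_middle_informative => // Hn.
    exfalso; apply: Hn. exact/indep_free.
Qed.


Lemma rank_le_inspan l1 l2 : (forall v, List.In v l1 -> inspan n v l2) ->
  (rank_vecs n l1 <= rank_vecs n l2)%coq_nat.
Proof.
  move=> H. rewrite !rank_vecs_mx. apply/leP. apply: mxrankS. apply: mx_subP => v Hv.
  apply/inspan_sub. exact: H.
Qed.

Lemma rank_cons_notin v vs : ~ inspan n v vs -> rank_vecs n (v :: vs) = S (rank_vecs n vs).
Proof.
  move=> Hn. rewrite !rank_vecs_mx. apply: rank_cons_notin_mx. apply/negP => H.
  apply: Hn. exact/inspan_sub.
Qed.

Lemma rank_le_n vs : (rank_vecs n vs <= n)%coq_nat.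
Proof. rewrite rank_vecs_mx. apply/leP. exact: rank_leq_col. Qed.

Lemma rank_full vs : (forall k, (k < n)%coq_nat -> List.In (e k) vs) -> rank_vecs n vs = n.
Proof.
  move=> H. rewrite rank_vecs_mx. apply/eqP. rewrite eqn_leq rank_leq_col /=.
  rewrite -{1}(mxrank1 R n). apply: mxrankS. apply/row_subP => k.
  have -> : row k (1%:M : 'M[R]_n) = rowv (e k).
  { apply/rowP => i. rewrite !mxE /e. case: (Nat.eqb_spec i k) => [Hik|Hik].
    - have -> : (k == i) = true by apply/eqP; apply: val_inj.
      by [].
    - have -> : (k == i) = false by apply/eqP => Hki; apply: Hik; rewrite Hki.
      by []. }
  apply: In_sub. apply: H. apply/ltP. exact: ltn_ord.
Qed.

Lemma rank_scale (p : vec) vs ws :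
  (forall i, (i < n)%coq_nat -> p i <> 0) ->
  Forall2 (fun v w => exists mu : R, mu <> 0 /\
      forall i, (i < n)%coq_nat -> v i * p i = mu * w i) vs ws ->
  rank_vecs n vs = rank_vecs n ws.
Proof.
  move=> Hp HF. rewrite !rank_vecs_mx.
  have HL : length vs = length ws := Forall2_length HF.
  pose P : 'M[R]_n := diag_mx (\row_(i < n) p i).
  have HPf : row_free P.
  { apply: inj_row_free => u Hu. apply/rowP => i.
    have := congr1 (fun M : 'M[R]_(1, n) => M 0 i) Hu. rewrite mul_mx_diag !mxE.
    move=> /eqP. rewrite mulf_eq0 => /orP [/eqP -> //|/eqP Hpi].
    exfalso. apply: (Hp i) => //. apply/ltP. exact: ltn_ord. }
  rewrite -(mxrankMfree (mx vs) HPf). apply/eqmx_rank/andP; split.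
  - apply/row_subP => k.
    have Hk : (k < length vs)%coq_nat by apply/ltP; exact: ltn_ord.
    have [mu [Hmu Hrow]] := Forall2_nth' _ _ _ (fun _ => 0) (fun _ => 0) HF k Hk.
    have Hk' : (k < length ws)%N by rewrite -HL ltn_ord.
    have -> : row k (mx vs *m P) = mu *: row (Ordinal Hk') (mx ws).
    { apply/rowP => i. rewrite mul_mx_diag !mxE. apply: Hrow. apply/ltP; exact: ltn_ord. }
    apply: scalemx_sub. exact: row_sub.
  - apply/row_subP => k.
    have Hk : (k < length vs)%coq_nat by rewrite HL; apply/ltP; exact: ltn_ord.
    have [mu [Hmu Hrow]] := Forall2_nth' _ _ _ (fun _ => 0) (fun _ => 0) HF k Hk.
    have Hk' : (k < length vs)%N by apply/ltP.
    have -> : row k (mx ws) = mu^-1 *: row (Ordinal Hk') (mx vs *m P).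
    { apply/rowP => i. rewrite mul_mx_diag !mxE /=.
      have -> : List.nth k vs (fun=> 0) i * p i = mu * List.nth k ws (fun=> 0) i.
      { apply: Hrow. apply/ltP; exact: ltn_ord. }
      rewrite mulrA mulVf ?mul1r //. by apply/eqP. }
    apply: scalemx_sub. exact: row_sub.
Qed.

Lemma exch u v W : inspan n u (v :: W) -> ~ inspan n u W -> inspan n v (u :: W).
Proof.
  move=> /inspan_sub Hu Hn.
  have Hn' : ~~ (rowv u <= mx W)%MS by apply/negP => H; apply: Hn; apply/inspan_sub.
  have Hv : ~~ (rowv v <= mx W)%MS.
  { apply/negP => H. move/negP: Hn'; apply. apply: (submx_trans Hu).
    apply: mx_subP => w /= [<-|Hw] //. exact: In_sub. }
  have Hle : (mx (u :: W) <= mx (v :: W))%MS.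
  { apply: mx_subP => w /= [<-|Hw] //. exact: (In_sub w (v :: W) (or_intror Hw)). }
  case: (mxrank_leqif_sup Hle) => _ Heq.
  have Hr : \rank (mx (u :: W)) == \rank (mx (v :: W)).
  { by rewrite (rank_cons_notin_mx _ _ Hn') (rank_cons_notin_mx _ _ Hv). }
  rewrite Heq in Hr. apply/inspan_sub. exact: (submx_trans (In_sub v (v :: W) (or_introl erefl)) Hr).
Qed.

End S.
End LA.


Definition Sum {A : Type} (f : A -> R) (l : list A) : R := fold_right Rplus 0 (map f l).

Lemma Sum_nil {A} (f : A -> R) : Sum f [] = 0. Proof. reflexivity. Qed.
Lemma Sum_cons {A} (f : A -> R) x l : Sum f (x :: l) = f x + Sum f l. Proof. reflexivity. Qed.
Lemma Sum_app {A} (f : A -> R) l1 l2 : Sum f (l1 ++ l2) = Sum f l1 + Sum f l2.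
Proof. unfold Sum. induction l1; simpl; [ring|]. rewrite IHl1. ring. Qed.
Lemma Sum_map {A B} (f : B -> R) (g : A -> B) l : Sum f (map g l) = Sum (fun x => f (g x)) l.
Proof. unfold Sum. rewrite map_map. reflexivity. Qed.
Lemma Sum_ext {A} (f g : A -> R) l : (forall x, In x l -> f x = g x) -> Sum f l = Sum g l.
Proof.
  induction l; intros H; [reflexivity|]. rewrite !Sum_cons, H by (left; auto).
  rewrite IHl; auto. intros; apply H; right; auto.
Qed.
Lemma Sum_plus {A} (f g : A -> R) l : Sum (fun x => f x + g x) l = Sum f l + Sum g l.
Proof. induction l; [simpl; unfold Sum; simpl; ring|]. rewrite !Sum_cons, IHl. ring. Qed.
Lemma Sum_scal {A} (f : A -> R) c l : Sum (fun x => c * f x) l = c * Sum f l.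
Proof. induction l; [unfold Sum; simpl; ring|]. rewrite !Sum_cons, IHl. ring. Qed.
Lemma Sum_opp {A} (f : A -> R) l : Sum (fun x => - f x) l = - Sum f l.
Proof. induction l; [unfold Sum; simpl; ring|]. rewrite !Sum_cons, IHl. ring. Qed.
Lemma Sum_zero {A} (l : list A) : Sum (fun _ => 0) l = 0.
Proof. induction l; [reflexivity|]. rewrite Sum_cons, IHl. ring. Qed.
Lemma Sum_swap {A B} (F : A -> B -> R) l1 l2 :
  Sum (fun x => Sum (fun y => F x y) l2) l1 = Sum (fun y => Sum (fun x => F x y) l1) l2.
Proof.
  induction l1.
  - simpl. rewrite Sum_nil. symmetry. apply Sum_zero.
  - rewrite Sum_cons, IHl1. rewrite <- Sum_plus. apply Sum_ext. intros. rewrite Sum_cons. ring.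
Qed.

Lemma subsets_map {A B} (f : A -> B) l : subsets (map f l) = map (map f) (subsets l).
Proof.
  induction l; simpl; [reflexivity|]. rewrite IHl, map_app, !map_map. reflexivity.
Qed.

Lemma Sum_subsets_app {A} (F : list A -> R) l1 l2 :
  Sum F (subsets (l1 ++ l2)) = Sum (fun B1 => Sum (fun B2 => F (B1 ++ B2)) (subsets l2)) (subsets l1).
Proof.
  revert F. induction l1; intros F.
  - simpl. rewrite Sum_cons, Sum_nil, Rplus_0_r. reflexivity.
  - simpl. rewrite !Sum_app, !Sum_map, !IHl1. reflexivity.
Qed.

Lemma inspan_In n v vs : In v vs -> inspan n v vs.
Proof. intros H x Hx. apply Hx, H. Qed.

Lemma inspan_mono n v l1 l2 : (forall w, In w l1 -> inspan n w l2) -> inspan n v l1 -> inspan n v l2.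
Proof. intros H Hv x Hx. apply Hv. intros w Hw. apply H; auto. Qed.

Lemma rank_eq_inspan n l1 l2 : (forall v, In v l1 -> inspan n v l2) -> (forall v, In v l2 -> inspan n v l1) ->
  rank_vecs n l1 = rank_vecs n l2.
Proof.
  intros H1 H2. apply Nat.le_antisymm; apply LA.rank_le_inspan; auto.
Qed.

Lemma rank_eq_In n l1 l2 : (forall v, In v l1 -> In v l2) -> (forall v, In v l2 -> In v l1) ->
  rank_vecs n l1 = rank_vecs n l2.
Proof. intros; apply rank_eq_inspan; intros; apply inspan_In; auto. Qed.

Lemma inspan_e_ge n k vs : (n <= k)%nat -> inspan n (e k) vs.
Proof. intros H x _. apply dot_e_ge; auto. Qed.

Section G.
Variable n : nat.
Variable t : R.

Definition G (U : list nat) (D : list vec) : R :=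
  Sum (fun S => (-1) ^ (length S) * t ^ (n - rank_vecs n (map e S ++ D))) (subsets U).

Lemma G_nil D : G [] D = t ^ (n - rank_vecs n D).
Proof. unfold G. simpl. rewrite Sum_cons, Sum_nil. simpl. ring. Qed.

Lemma G_rec u U D : G (u :: U) D = G U D - G U (e u :: D).
Proof.
  unfold G. simpl subsets. rewrite Sum_app, Sum_map.
  assert (Sum (fun x => (-1) ^ length (u :: x) * t ^ (n - rank_vecs n (map e (u :: x) ++ D))) (subsets U)
          = - Sum (fun S => (-1) ^ length S * t ^ (n - rank_vecs n (map e S ++ e u :: D))) (subsets U)) as ->.
  { rewrite <- Sum_opp. apply Sum_ext. intros S _.
    simpl length. simpl map. change ((e u :: map e S) ++ D) with (e u :: (map e S ++ D)).
    rewrite (rank_eq_In n (e u :: map e S ++ D) (map e S ++ e u :: D)).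
    - simpl. ring.
    - intros v Hv. simpl in Hv. apply in_or_app. destruct Hv as [<-|Hv].
      + right; left; auto.
      + apply in_app_or in Hv. destruct Hv; [left|right; right]; auto.
    - intros v Hv. apply in_app_or in Hv. simpl. destruct Hv as [Hv|[<-|Hv]]; auto using in_or_app. }
  ring.
Qed.

Lemma G_inv U D D' : (forall v, In v D -> inspan n v D') -> (forall v, In v D' -> inspan n v D) ->
  G U D = G U D'.
Proof.
  intros H1 H2. unfold G. apply Sum_ext. intros S _. f_equal. f_equal. f_equal.
  apply rank_eq_inspan; intros v Hv; apply in_app_or in Hv; destruct Hv as [Hv|Hv].
  - apply inspan_In, in_or_app; auto.
  - eapply inspan_mono; [|apply H1; auto]. intros w Hw. apply inspan_In, in_or_app; auto.
  - apply inspan_In, in_or_app; auto.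
  - eapply inspan_mono; [|apply H2; auto]. intros w Hw. apply inspan_In, in_or_app; auto.
Qed.

Lemma G_absorb U v D : inspan n v D -> G U (v :: D) = G U D.
Proof.
  intros Hv. apply G_inv.
  - intros w [<-|Hw]; auto using inspan_In.
  - intros w Hw. apply inspan_In. right; auto.
Qed.

Lemma G_canc k U D : In k U -> inspan n (e k) D -> G U D = 0.
Proof.
  revert D. induction U as [|u U IH]; intros D Hk HD; [destruct Hk|].
  rewrite G_rec. destruct (classic (inspan n (e u) D)) as [Hu|Hu].
  - rewrite G_absorb by auto. ring.
  - destruct Hk as [->|Hk]; [contradiction|].
    rewrite (IH D), (IH (e u :: D)); auto; [ring|].
    eapply inspan_mono; [|apply HD]. intros w Hw. apply inspan_In; right; auto.
Qed.

Definition graphic (D : list vec) : Prop :=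
  forall v, In v D -> (exists i j, (i < n)%nat /\ (j < n)%nat /\ v = diff i j) \/
                      (exists w, (w < n)%nat /\ v = e w).

Lemma ker_graphic D z : graphic D ->
  (forall i j, (i < n)%nat -> (j < n)%nat -> In (diff i j) D -> z i = z j) ->
  (forall w, (w < n)%nat -> In (e w) D -> z w = 0) -> KerL n D z.
Proof.
  intros HG Hd He v Hv. destruct (HG v Hv) as [[i [j [Hi [Hj ->]]]]|[w [Hw ->]]].
  - rewrite dot_diff by auto. rewrite (Hd i j) by auto. ring.
  - rewrite dot_e_lt by auto. auto.
Qed.

Lemma KerL_diff D x i j : KerL n D x -> In (diff i j) D -> (i < n)%nat -> (j < n)%nat -> x i = x j.
Proof. intros H Hin Hi Hj. specialize (H _ Hin). rewrite dot_diff in H by auto. lra. Qed.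

Lemma KerL_e D x w : KerL n D x -> In (e w) D -> (w < n)%nat -> x w = 0.
Proof. intros H Hin Hw. specialize (H _ Hin). rewrite dot_e_lt in H by auto. auto. Qed.

Lemma not_inspan_ex v D : ~ inspan n v D -> exists x, KerL n D x /\ dot n v x <> 0.
Proof.
  intros H. apply not_all_ex_not in H. destruct H as [x Hx]. exists x.
  apply imply_to_and in Hx. auto.
Qed.

Lemma not_inspan_e_lt k D : ~ inspan n (e k) D -> (k < n)%nat.
Proof. intros H. destruct (Nat.lt_ge_cases k n); auto. exfalso. apply H, inspan_e_ge; auto. Qed.

Lemma GR k U D : graphic D -> ~ inspan n (e k) D ->
  (forall u, In u U -> ~ inspan n (e u) (e k :: D)) -> ~ inspan n (e k) (map e U ++ D).
Proof.
  intros HG Hk HU.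
  pose proof (not_inspan_e_lt _ _ Hk) as Hkn.
  destruct (not_inspan_ex _ _ Hk) as [y [Hy Hyk]]. rewrite dot_e_lt in Hyk by auto.
  assert (exists z, (forall i j, (i < n)%nat -> (j < n)%nat -> In (diff i j) D -> z i = z j) /\
                    (forall w, (w < n)%nat -> In (e w) D -> z w = 0) /\ z k = 1 /\
                    (forall u, In u U -> (u < n)%nat -> z u = 0)) as [z [Hz1 [Hz2 [Hz3 Hz4]]]].
  { clear - HG Hy Hyk HU Hkn. induction U as [|u U IH].
    - exists (fun i => if Req_EM_T (y i) (y k) then 1 else 0). repeat split.
      + intros i j Hi Hj Hd. rewrite (KerL_diff D y i j); auto.
      + intros w Hw Hin. rewrite (KerL_e D y w); auto.
        destruct (Req_EM_T 0 (y k)); [lra|auto].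
      + destruct (Req_EM_T (y k) (y k)); [auto|lra].
      + intros _ [].
    - destruct IH as [z' [H1 [H2 [H3 H4]]]]. { intros; apply HU; right; auto. }
      assert (Hu : ~ inspan n (e u) (e k :: D)) by (apply HU; left; auto).
      pose proof (not_inspan_e_lt _ _ Hu) as Hun.
      destruct (not_inspan_ex _ _ Hu) as [x [Hx Hxu]]. rewrite dot_e_lt in Hxu by auto.
      assert (Hxk : x k = 0) by (apply (KerL_e (e k :: D)); simpl; auto).
      assert (HxD : KerL n D x) by (intros v Hv; apply Hx; right; auto).
      exists (fun i => z' i * (if Req_EM_T (x i) 0 then 1 else 0)). repeat split.
      + intros i j Hi Hj Hd. rewrite (H1 i j), (KerL_diff D x i j); auto.
      + intros w Hw Hin. rewrite H2 by auto. ring.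
      + rewrite H3, Hxk. destruct (Req_EM_T 0 0); [ring|lra].
      + intros v [Hv|Hv] Hvn.
        * subst v. destruct (Req_EM_T (x u) 0); [contradiction|ring].
        * rewrite H4 by auto. ring. }
  intros Hsp. assert (Hd : dot n (e k) z = 0).
  { apply Hsp. intros v Hv. apply in_app_or in Hv. destruct Hv as [Hv|Hv].
    - apply in_map_iff in Hv. destruct Hv as [u [<- Hu]].
      destruct (Nat.lt_ge_cases u n).
      + rewrite dot_e_lt by auto. auto.
      + apply dot_e_ge; auto.
    - apply (ker_graphic D z); auto. }
  rewrite dot_e_lt in Hd by auto. lra.
Qed.

Lemma G_formula U D : graphic D -> (forall u, In u U -> ~ inspan n (e u) D) ->
  G U D = t ^ (n - rank_vecs n (map e U ++ D)) *
          (t - 1) ^ (rank_vecs n (map e U ++ D) - rank_vecs n D).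
Proof.
  revert D. induction U as [|k U IH]; intros D HG HU.
  - rewrite G_nil. simpl. rewrite Nat.sub_diag. simpl. ring.
  - assert (Hk : ~ inspan n (e k) D) by (apply HU; left; auto).
    pose proof (not_inspan_e_lt _ _ Hk) as Hkn.
    assert (HU' : forall u, In u U -> ~ inspan n (e u) D) by (intros; apply HU; right; auto).
    rewrite G_rec, (IH D HG HU').
    set (R0 := rank_vecs n D). set (R1 := rank_vecs n (map e U ++ D)).
    assert (H01 : (R0 <= R1)%nat).
    { apply LA.rank_le_inspan. intros v Hv. apply inspan_In, in_or_app; auto. }
    change (map e (k :: U) ++ D) with (e k :: (map e U ++ D)).
    destruct (classic (exists u, In u U /\ inspan n (e u) (e k :: D))) as [[u [Hu Hsp]]|Hno].
    + rewrite (G_canc u U (e k :: D)) by auto.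
      assert (Hin : inspan n (e k) (map e U ++ D)).
      { eapply inspan_mono; [|apply (LA.exch n (e u) (e k) D Hsp); apply HU'; auto].
        intros w [<-|Hw]; apply inspan_In, in_or_app; [left; apply in_map; auto|right; auto]. }
      rewrite (rank_eq_inspan n (e k :: map e U ++ D) (map e U ++ D)).
      * fold R1. ring.
      * intros v [<-|Hv]; auto using inspan_In.
      * intros v Hv; apply inspan_In; right; auto.
    + assert (HU2 : forall u, In u U -> ~ inspan n (e u) (e k :: D)).
      { intros u Hu Hs. apply Hno. exists u; auto. }
      assert (HG2 : graphic (e k :: D)).
      { intros v [<-|Hv]; [right; exists k; auto|apply HG; auto]. }
      rewrite (IH (e k :: D) HG2 HU2).
      assert (HR : ~ inspan n (e k) (map e U ++ D)) by (apply GR; auto).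
      rewrite (LA.rank_cons_notin n (e k) D Hk).
      rewrite (rank_eq_In n (map e U ++ e k :: D) (e k :: map e U ++ D)).
      2:{ intros v Hv. apply in_app_or in Hv. destruct Hv as [Hv|[<-|Hv]]; [right; apply in_or_app; auto|left; auto|right; apply in_or_app; auto]. }
      2:{ intros v [<-|Hv]; apply in_or_app; [right; left; auto|]. apply in_app_or in Hv. destruct Hv; [left|right;right]; auto. }
      rewrite (LA.rank_cons_notin n (e k) _ HR). fold R1. fold R0.
      pose proof (LA.rank_le_n n (e k :: map e U ++ D)) as Hle.
      rewrite (LA.rank_cons_notin n (e k) _ HR) in Hle. fold R1 in Hle.
      replace (n - R1)%nat with (S (n - S R1)) by lia.
      replace (S R1 - R0)%nat with (S (R1 - R0)) by lia.
      replace (S R1 - S R0)%nat with (R1 - R0)%nat by lia.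
      simpl. ring.
Qed.

End G.


Definition edge := (nat * nat * R)%type.
Definition nA (ed : edge) : vec := match ed with (i, j, c) => vlin 1 (e i) (- c) (e j) end.
Definition nC (ed : edge) : vec := match ed with (i, j, c) => diff i j end.
Definition hA (ed : edge) : hyperplane := mkH (nA ed) 0.
Definition hC (a1 : R) (ed : edge) : hyperplane :=
  match ed with (i, j, c) => mkH (diff i j) (ln c / ln a1) end.
Definition good (n : nat) (ed : edge) : Prop :=
  match ed with (i, j, c) => (i < n)%nat /\ (j < n)%nat /\ 0 < c end.

Lemma dot_nA n i j c x : (i < n)%nat -> (j < n)%nat -> dot n (nA (i, j, c)) x = x i - c * x j.
Proof. intros. simpl. rewrite dot_vlin, !dot_e_lt by auto. ring. Qed.

Lemma KerA n E x : (forall ed, In ed E -> good n ed) ->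
  KerL n (map nA E) x <-> (forall i j c, In (i, j, c) E -> x i = c * x j).
Proof.
  intros HE. split.
  - intros H i j c Hin. destruct (HE _ Hin) as [Hi [Hj Hc]].
    specialize (H (nA (i, j, c)) (in_map _ _ _ Hin)). rewrite dot_nA in H by auto. lra.
  - intros H v Hv. apply in_map_iff in Hv. destruct Hv as [[[i j] c] [<- Hin]].
    destruct (HE _ Hin) as [Hi [Hj Hc]]. rewrite dot_nA by auto. rewrite (H i j c Hin). ring.
Qed.

Lemma on_hyp_hC n a1 i j c x : (i < n)%nat -> (j < n)%nat ->
  on_hyp n (hC a1 (i, j, c)) x <-> x i - x j = ln c / ln a1.
Proof.
  intros Hi Hj. unfold on_hyp. simpl. fold (dot n (diff i j) x). rewrite dot_diff by auto. tauto.
Qed.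

Lemma PE_unbal n t a1 E : (forall ed, In ed E -> good n ed) -> ln a1 <> 0 ->
  ~ central_in n (map (hC a1) E) -> G n t (seq 0 n) (map nA E) = 0.
Proof.
  intros HE Ha Hnc.
  destruct (classic (exists k, (k < n)%nat /\ inspan n (e k) (map nA E))) as [[k [Hk Hs]]|Hno].
  - apply (G_canc n t k); auto. apply in_seq. lia.
  - exfalso. apply Hnc.
    assert (Hy : forall m, (m <= n)%nat -> exists y, KerL n (map nA E) y /\ (forall i, 0 <= y i) /\
                                         (forall i, (i < m)%nat -> 0 < y i)).
    { induction m; intros Hm.
      - exists (fun _ => 0). repeat split.
        + apply KerA; auto. intros. ring.
        + intros; lra.
        + intros; lia.
      - destruct IHm as [y [Hy1 [Hy2 Hy3]]]; [lia|].
        assert (Hm' : ~ inspan n (e m) (map nA E)) by (intros H; apply Hno; exists m; split; [lia|auto]).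
        destruct (not_inspan_ex n _ _ Hm') as [x [Hx Hxm]]. rewrite dot_e_lt in Hxm by lia.
        exists (fun i => y i + Rabs (x i)). repeat split.
        + apply KerA; auto. intros i j c Hin.
          pose proof (proj1 (KerA n E y HE) Hy1 i j c Hin) as E1.
          pose proof (proj1 (KerA n E x HE) Hx i j c Hin) as E2.
          destruct (HE _ Hin) as [_ [_ Hc]].
          rewrite E1, E2, Rabs_mult, (Rabs_pos_eq c) by lra. ring.
        + intros i. pose proof (Hy2 i). pose proof (Rabs_pos (x i)). lra.
        + intros i Hi. destruct (Nat.eq_dec i m) as [->|Hne].
          * pose proof (Hy2 m). pose proof (Rabs_pos_lt _ Hxm). lra.
          * assert (Him : (i < m)%nat) by lia. pose proof (Hy3 i Him). pose proof (Rabs_pos (x i)). lra. }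
    destruct (Hy n (le_n n)) as [y [Hy1 [Hy2 Hy3]]].
    exists (fun i => ln (y i) / ln a1). intros h Hh. apply in_map_iff in Hh.
    destruct Hh as [[[i j] c] [<- Hin]]. destruct (HE _ Hin) as [Hi [Hj Hc]].
    apply on_hyp_hC; auto.
    pose proof (proj1 (KerA n E y HE) Hy1 i j c Hin) as E1.
    rewrite E1, ln_mult by (auto; apply Hy3; auto). field. auto.
Qed.

Lemma Forall2_map_same {A} (P : vec -> vec -> Prop) (f g : A -> vec) l :
  (forall x, In x l -> P (f x) (g x)) -> Forall2 P (map f l) (map g l).
Proof.
  induction l; intros H; simpl; constructor.
  - apply H; left; auto.
  - apply IHl; intros; apply H; right; auto.
Qed.

Lemma rank_scale' n (p : vec) vs ws : (forall i, (i < n)%nat -> p i <> 0) ->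
  Forall2 (fun v w => exists mu : R, mu <> 0 /\ forall i, (i < n)%nat -> v i * p i = mu * w i) vs ws ->
  rank_vecs n vs = rank_vecs n ws.
Proof. exact (LA.rank_scale n p vs ws). Qed.

Lemma e_mul i l (p : vec) : e i l * p l = e i l * p i.
Proof. unfold e. destruct (Nat.eqb_spec l i); [subst; auto|ring]. Qed.

Lemma PE_bal n t a1 E : (forall ed, In ed E -> good n ed) -> ln a1 <> 0 ->
  central_in n (map (hC a1) E) -> G n t (seq 0 n) (map nA E) = (t - 1) ^ (n - rank_vecs n (map nC E)).
Proof.
  intros HE Ha [x Hx].
  set (p := fun i => exp (x i * ln a1)).
  assert (Hp : forall i j c, In (i, j, c) E -> p i = c * p j).
  { intros i j c Hin. destruct (HE _ Hin) as [Hi [Hj Hc]].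
    assert (H := Hx _ (in_map (hC a1) _ _ Hin)). apply on_hyp_hC in H; auto.
    unfold p. replace (x i * ln a1) with (ln c + x j * ln a1).
    - rewrite exp_plus, exp_ln; auto.
    - assert (x i = x j + ln c / ln a1) as -> by lra. field. auto. }
  transitivity (G n t (seq 0 n) (map nC E)).
  - unfold G. apply Sum_ext. intros S _. f_equal. f_equal. f_equal.
    apply (rank_scale' n p).
    + intros i _. unfold p. apply Rgt_not_eq, exp_pos.
    + apply Forall2_app.
      * apply Forall2_map_same. intros s _. exists (p s). split.
        -- unfold p. apply Rgt_not_eq, exp_pos.
        -- intros i _. rewrite e_mul. ring.
      * apply Forall2_map_same. intros [[i j] c] Hin. exists (p i). split.
        -- unfold p. apply Rgt_not_eq, exp_pos.
        -- intros l _. simpl. unfold diff, vlin.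
           rewrite Rmult_plus_distr_r, !Rmult_assoc, (e_mul i l p), (e_mul j l p), (Hp i j c Hin). ring.
  - assert (HG : graphic n (map nC E)).
    { intros v Hv. apply in_map_iff in Hv. destruct Hv as [[[i j] c] [<- Hin]].
      destruct (HE _ Hin) as [Hi [Hj Hc]]. left. exists i, j. auto. }
    rewrite G_formula; auto.
    + rewrite (LA.rank_full n).
      * rewrite Nat.sub_diag. simpl. ring.
      * intros k Hk. apply in_or_app. left. apply in_map, in_seq. lia.
    + intros u Hu Hs. apply in_seq in Hu.
      assert (H1 := Hs (fun _ => 1)).
      rewrite dot_e_lt in H1 by lia.
      assert (1 = 0) by (apply H1; intros v Hv; apply in_map_iff in Hv;
        destruct Hv as [[[i j] c] [<- Hin]]; destruct (HE _ Hin) as [Hi [Hj Hc]];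
        simpl; rewrite dot_diff by auto; ring).
      lra.
Qed.


Definition L (n : nat) (a : list nat) : list edge :=
  map (fun p => (fst p, snd p, 1)) (pairs_lt n) ++
  flat_map (fun p => map (fun r => (fst p, snd p, INR r)) a) (pairs_neq n).

Lemma map_flat_map' {A B C} (f : B -> C) (g : A -> list B) l :
  map f (flat_map g l) = flat_map (fun x => map f (g x)) l.
Proof. induction l; simpl; auto. rewrite map_app, IHl. auto. Qed.

Lemma A_decomp n a : A_arr n a = map (fun i => mkH (e i) 0) (seq 0 n) ++ map hA (L n a).
Proof.
  unfold A_arr, L. rewrite map_app. f_equal. f_equal.
  - unfold braid. rewrite map_map. apply map_ext. intros [i j]. reflexivity.
  - rewrite map_flat_map'. apply flat_map_ext. intros [i j]. rewrite map_map. reflexivity.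
Qed.

Lemma C_decomp n a : C_arr n a = map (hC (INR (hd O a))) (L n a).
Proof.
  unfold C_arr, L. rewrite map_app. f_equal.
  - unfold braid. rewrite map_map. apply map_ext. intros [i j]. simpl.
    rewrite ln_1. unfold Rdiv. rewrite Rmult_0_l. reflexivity.
  - rewrite map_flat_map'. apply flat_map_ext. intros [i j]. rewrite map_map. reflexivity.
Qed.

Lemma L_good n a : Forall (fun r => (2 <= r)%nat) a -> forall ed, In ed (L n a) -> good n ed.
Proof.
  intros Ha ed Hed. unfold L in Hed. apply in_app_or in Hed. destruct Hed as [H|H].
  - apply in_map_iff in H. destruct H as [[i j] [<- Hp]]. unfold pairs_lt in Hp.
    apply in_flat_map in Hp. destruct Hp as [i' [Hi' Hp]]. apply in_map_iff in Hp.
    destruct Hp as [j' [Heq Hj']]. inversion Heq; subst. apply in_seq in Hi'. apply in_seq in Hj'.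
    simpl. repeat split; try lia. lra.
  - apply in_flat_map in H. destruct H as [[i j] [Hp H]]. apply in_map_iff in H.
    destruct H as [r [<- Hr]]. unfold pairs_neq in Hp.
    apply in_flat_map in Hp. destruct Hp as [i' [Hi' Hp]]. apply in_map_iff in Hp.
    destruct Hp as [j' [Heq Hj']]. inversion Heq; subst. apply in_seq in Hi'.
    apply filter_In in Hj'. destruct Hj' as [Hj' _]. apply in_seq in Hj'.
    simpl. repeat split; try lia. apply lt_0_INR.
    rewrite Forall_forall in Ha. specialize (Ha r Hr). lia.
Qed.

Lemma filter_all {A} (f : A -> bool) l : (forall x, In x l -> f x = true) -> filter f l = l.
Proof.
  induction l; intros H; simpl; auto. rewrite H by (left; auto). rewrite IHl; auto.
  intros; apply H; right; auto.
Qed.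

Lemma fold_filter {A} (F : A -> R) P l :
  fold_right Rplus 0 (map F (filter P l)) = Sum (fun x => if P x then F x else 0) l.
Proof.
  induction l; [reflexivity|]. rewrite Sum_cons. simpl. destruct (P a); simpl; rewrite IHl; ring.
Qed.

Lemma sumn_R_zero m f : (forall i, f i = 0) -> sumn_R m f = 0.
Proof. induction m; intros H; simpl; auto. rewrite IHm, H; auto. ring. Qed.

Theorem theorem4p1 (a : list nat) (n : nat)
  (Ha_ne : a <> [])
  (Ha_nodup : NoDup a)
  (Ha_ge2 : Forall (fun r => (2 <= r)%nat) a) :
  forall t : R, charpoly n (A_arr n a) t = charpoly n (C_arr n a) (t - 1).
Proof.
  intros t. set (a1 := INR (hd O a)).
  assert (Ha1 : ln a1 <> 0).
  { destruct a as [|r a']; [contradiction|]. simpl in a1. inversion Ha_ge2; subst.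
    apply Rgt_not_eq. unfold a1. rewrite <- ln_1. apply ln_increasing; [lra|].
    replace 1 with (INR 1) by reflexivity. apply lt_INR. lia. }
  pose proof (L_good n a Ha_ge2) as HL.
  unfold charpoly.
  rewrite (filter_all (central_b n) (subsets (A_arr n a))).
  2:{ intros B HB. unfold central_b. destruct (excluded_middle_informative _) as [_|Hn]; auto.
      exfalso. apply Hn. exists (fun _ => 0). intros h Hh.
      pose proof (subsets_incl _ _ HB h Hh) as HA. rewrite A_decomp in HA.
      unfold on_hyp. rewrite sumn_R_zero by (intros; ring).
      apply in_app_or in HA. destruct HA as [HA|HA]; apply in_map_iff in HA;
        destruct HA as [x [<- _]]; reflexivity. }
  rewrite fold_filter. change (fold_right Rplus 0 (map ?F ?l)) with (Sum F l).
  rewrite A_decomp, C_decomp. fold a1.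
  rewrite Sum_subsets_app, Sum_swap, !subsets_map, !Sum_map.
  apply Sum_ext. intros E HE.
  assert (HEg : forall ed, In ed E -> good n ed) by (intros; apply HL; eapply subsets_incl; eauto).
  rewrite Sum_map.
  transitivity ((-1) ^ length E * G n t (seq 0 n) (map nA E)).
  { unfold G. rewrite <- Sum_scal. apply Sum_ext. intros S _.
    rewrite length_app, !length_map, pow_add.
    unfold rank_hyps. rewrite map_app, !map_map. simpl. assert (Hr : rank_vecs n (map (fun x => e x) S ++ map (fun x => nA x) E) = rank_vecs n (map e S ++ map nA E)) by reflexivity. rewrite Hr. ring. }
  unfold central_b. destruct (excluded_middle_informative _) as [Hc|Hc].
  - rewrite (PE_bal n t a1 E HEg Ha1 Hc). rewrite length_map.
    unfold rank_hyps. rewrite map_map.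
    replace (map (fun x => nrm (hC a1 x)) E) with (map nC E); [reflexivity|].
    apply map_ext. intros [[i j] c]. reflexivity.
  - rewrite (PE_unbal n t a1 E HEg Ha1 Hc). ring.
Qed.
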